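(* Let $\hat C\subseteq\mathbb Z^2$ be a set whose set of $x$-coordinates $\hat C_/$ is bounded. Let $\hat F_1,\dots,\hat F_t$ ($t\ge1$) be the intersections of $\hat C$ with those vertical lines $\{x=c\}$ that meet $\hat C$ in a finite nonempty set, and let $\hat K_1,\dots,\hat K_r$ be the intersections of $\hat C$ with those vertical lines that meet $\hat C$ in an infinite set; for a point set $S$ in one vertical line $\{x=c\}$ write $\operatorname{Col}(S)=\{(c,y):y\in\mathbb Z\}$. Let $\ell$ be the minimal number of elements of an integer interval $[a,b]$ for which there exists $W\subseteq\mathbb Z$ with $\hat C_/+W=[a,b]$. Suppose that for each $i\in\{1,\dots,r\}$ there are sets $\hat S_{i,1},\dots,\hat S_{i,n_i}$ with $\hat S_{i,1}\cup\cdots\cup\hat S_{i,n_i}=\hat K_i$ such that for each $i,j$ there exist (possibly empty) sets $\hat W_{i,j;\mu},\hat U_{i,j;\nu}\subseteq\mathbb Z^2$ ($1\le\mu\le t$, $1\le\nu\le r$) with \[\operatorname{Col}(\hat K_i)\setminus\hat S_{i,j}=\bigcup_{\mu=1}^{t}\bigl(\hat F_\mu+\hat W_{i,j;\mu}\bigr)\cup\bigcup_{\nu=1}^{r}\bigl(\hat K_\nu+\hat U_{i,j;\nu}\bigr).\] Then for every integer $m$ with \[m\ge(\ell+1)\Bigl(t+\sum_{i=1}^r n_i\Bigr),\] the set $C=\pi_m(\hat C)$ arises as a minimal additive complement in $\mathbb Z$.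
   Context: Sums of subsets of $\mathbb Z^2$ or $\mathbb Z$ are Minkowski sums $X+Y=\{x+y:x\in X,y\in Y\}$. For $m\ge1$, $\pi_m:\mathbb Z^2\to\mathbb Z$ is the map $(x,y)\mapsto x+my$ (equivalently the quotient $\mathbb Z^2\to\mathbb Z^2/\mathbb Z(m,-1)\cong\mathbb Z$). $C\subseteq\mathbb Z$ is a minimal additive complement (MAC) to $W\subseteq\mathbb Z$ if $C+W=\mathbb Z$ and no proper subset $C'\subsetneq C$ satisfies $C'+W=\mathbb Z$; $C$ arises as a MAC if such a $W$ exists. *)

(* Defs.v *)
From Stdlib Require Import ZArith List.
Import ListNotations.
Open Scope Z_scope.

Definition set1 := Z -> Prop.
Definition set2 := (Z * Z)%type -> Prop.

Definition sumset1 (X Y : set1) : set1 :=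
  fun z => exists x y, X x /\ Y y /\ z = x + y.
Definition sumset2 (X Y : set2) : set2 :=
  fun p => exists x y, X x /\ Y y /\ p = (fst x + fst y, snd x + snd y).

Definition pi (m : Z) (p : Z * Z) : Z := fst p + m * snd p.
Definition pi_image (m : Z) (Ch : set2) : set1 :=
  fun z => exists p, Ch p /\ z = pi m p.

Definition is_MAC (C W : set1) : Prop :=
  (forall z, sumset1 C W z) /\
  forall C' : set1, (forall z, C' z -> C z) -> (exists z, C z /\ ~ C' z) ->
    ~ (forall z, sumset1 C' W z).
Definition arises_as_MAC (C : set1) : Prop := exists W : set1, is_MAC C W.

Definition xcoords (Ch : set2) : set1 := fun x => exists y, Ch (x, y).
Definition bounded1 (A : set1) : Prop := exists B, forall x, A x -> Z.abs x <= B.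
Definition fiber (Ch : set2) (c : Z) : set2 := fun p => Ch p /\ fst p = c.
Definition Col (c : Z) : set2 := fun p => fst p = c.
Definition fin_set (A : set1) : Prop := exists l : list Z, forall y, A y -> In y l.

Definition interval_complement (A : set1) (a b : Z) : Prop :=
  a <= b /\ exists W : set1, forall z, sumset1 A W z <-> (a <= z /\ z <= b).
Definition is_ell (Ch : set2) (l : Z) : Prop :=
  (exists a b, interval_complement (xcoords Ch) a b /\ l = b - a + 1) /\
  (forall a b, interval_complement (xcoords Ch) a b -> l <= b - a + 1).

(* Main.v *)
Require Import Defs.
From Stdlib Require Import ZArith List Lia Classical.
Import ListNotations.
Open Scope Z_scope.

Definition special (N l m x : Z) : Prop :=
  exists s q, 0 <= s < N /\ x = s*(l+1) + m*q.
Definition clean (N l m p : Z) : Prop :=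
  forall i, 0 <= i <= l - 1 -> ~ special N l m (p + i).

Lemma uniq_rep l m N s t c c' q q' : 1 <= l -> m >= (l+1)*N ->
  0 <= s < N -> 0 <= t < N -> -(l-1) <= c - c' <= l-1 ->
  s*(l+1) - c + m*q = t*(l+1) - c' + m*q' -> s = t /\ c = c' /\ q = q'.
Proof.
  intros Hl Hm Hs Ht Hc Heq.
  assert (HD : q = q').
  { assert (Hst1 : (s-t)*(l+1) <= (N-1)*(l+1)) by nia.
    assert (Hst2 : (t-s)*(l+1) <= (N-1)*(l+1)) by nia.
    destruct (Z.lt_total q q') as [H|[H|H]]; auto.
    - assert (m*(q'-q) >= m) by nia. nia.
    - assert (m*(q-q') >= m) by nia. nia. }
  subst q'.
  assert (s = t).
  { destruct (Z.lt_total s t) as [H|[H|H]]; auto.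
    - assert ((t-s)*(l+1) >= l+1) by nia. nia.
    - assert ((s-t)*(l+1) >= l+1) by nia. nia. }
  subst t. lia.
Qed.

Lemma not_special N l m r' q0 : 1 <= l -> m >= (l+1)*N -> 0 <= r' < m ->
  (forall s, 0 <= s < N -> r' <> s*(l+1)) -> ~ special N l m (r' + m*q0).
Proof.
  intros Hl Hm Hr Hs [s [q [Hs' Heq]]].
  assert (Hb : s*(l+1) <= (N-1)*(l+1)) by nia.
  assert (q = q0).
  { destruct (Z.lt_total q q0) as [H|[H|H]]; auto.
    - assert (m*(q0-q) >= m) by nia. nia.
    - assert (m*(q-q0) >= m) by nia. nia. }
  subst. apply (Hs s Hs'). lia.
Qed.

Lemma find_clean N l m z : 1 <= l -> 1 <= N -> m >= (l+1)*N ->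
  ~ special N l m z -> exists p, clean N l m p /\ p <= z <= p + l - 1.
Proof.
  intros Hl HN Hm Hz.
  assert (Hm0 : m > 0) by nia.
  pose proof (Z.div_mod z m ltac:(lia)) as Hzd.
  pose proof (Z.mod_pos_bound z m ltac:(lia)) as Hr.
  set (r := z mod m) in *. set (q0 := z / m) in *.
  pose proof (Z.div_mod r (l+1) ltac:(lia)) as Hrd.
  pose proof (Z.mod_pos_bound r (l+1) ltac:(lia)) as Hi.
  set (s0 := r / (l+1)) in *. set (i0 := r mod (l+1)) in *.
  assert (Hs0 : 0 <= s0) by (apply Z.div_pos; lia).
  destruct (Z_lt_le_dec s0 N) as [Hlt|Hge].
  - assert (i0 <> 0).
    { intro H0. apply Hz. exists s0, q0. split. lia. lia. }
    exists (s0*(l+1) + 1 + m*q0). split.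
    + intros i Hi' Hsp.
      assert (Hb0 : s0*(l+1) <= (N-1)*(l+1)) by nia.
      apply (not_special N l m (s0*(l+1)+1+i) q0 Hl Hm).
      * lia.
      * intros s Hs Heq.
        destruct (Z.lt_total s0 s) as [Hc|[Hc|Hc]].
        -- assert ((s-s0)*(l+1) >= l+1) by nia. nia.
        -- subst s. lia.
        -- assert ((s0-s)*(l+1) >= l+1) by nia. nia.
      * replace (s0 * (l + 1) + 1 + i + m * q0) with (s0 * (l + 1) + 1 + m * q0 + i) by ring. exact Hsp.
    + lia.
  - exists (r - l + 1 + m*q0). split.
    + intros i Hi' Hsp.
      assert (Hb0 : s0*(l+1) >= N*(l+1)) by nia.
      assert (HN1 : N*(l+1) >= l+1) by nia.
      apply (not_special N l m (r - l + 1 + i) q0 Hl Hm).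
      * lia.
      * intros s Hs Heq.
        assert (Hb1 : s*(l+1) <= (N-1)*(l+1)) by nia. nia.
      * replace (r - l + 1 + i + m * q0) with (r - l + 1 + m * q0 + i) by ring. exact Hsp.
    + lia.
Qed.

Lemma list_bound (L : list Z) : exists R, 0 <= R /\ forall y, In y L -> Z.abs y <= R.
Proof.
  induction L as [|x L [R [HR H]]].
  - exists 0. split. lia. intros y [].
  - exists (Z.abs x + R). split. lia. intros y [<-|Hy]. lia. specialize (H y Hy). lia.
Qed.

Lemma unif_bound (Ch : set2) (F : list Z) :
  (forall c, In c F -> fin_set (fun y => Ch (c,y))) ->
  exists R, 0 <= R /\ forall c y, In c F -> Ch (c,y) -> Z.abs y <= R.
Proof.
  induction F as [|c0 F IH]; intros Hf.
  - exists 0. split. lia. intros c y [].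
  - destruct IH as [R [HR H]]. { intros c Hc. apply Hf. right. exact Hc. }
    destruct (Hf c0 (or_introl eq_refl)) as [L HL].
    destruct (list_bound L) as [R' [HR' H']].
    exists (R + R'). split. lia.
    intros c y [<-|Hc] Hy.
    + specialize (H' y (HL y Hy)). lia.
    + specialize (H c y Hc Hy). lia.
Qed.

Lemma fin_cover (Y : Z -> Prop) R : 0 <= R -> (forall y, Y y -> Z.abs y <= R) ->
  (exists y, Y y) -> forall z, exists y', Y y' /\
  ~ (exists y1 y2, Y y1 /\ Y y2 /\ y1 <> y2 /\ z - y' = (4*R+1)*y1 - y2).
Proof.
  intros HR HY [y1 Hy1] z.
  apply NNPP. intro Hn.
  assert (H : forall y, Y y -> exists y1 y2, Y y1 /\ Y y2 /\ y1 <> y2 /\ z - y = (4*R+1)*y1 - y2).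
  { intros y Hy. apply NNPP. intro H. apply Hn. exists y. split; auto. }
  destruct (H y1 Hy1) as [ys [yb [Hys [Hyb [Hne Heq]]]]].
  set (s := (4*R+1)*ys - z).
  assert (Hstep : forall y, Y y -> Y (y + s) /\ y + s <> ys).
  { intros y Hy. destruct (H y Hy) as [ya [yc [Hya [Hyc [Hne' Heq']]]]].
    assert (ya = ys).
    { pose proof (HY _ Hy). pose proof (HY _ Hy1). pose proof (HY _ Hyb). pose proof (HY _ Hyc).
      destruct (Z.lt_total ya ys) as [Hl|[Hl|Hl]]; auto.
      - assert ((4*R+1)*(ys-ya) >= 4*R+1) by nia. lia.
      - assert ((4*R+1)*(ya-ys) >= 4*R+1) by nia. lia. }
    subst ya. replace (y + s) with yc by (unfold s; lia). auto. }
  destruct (Z.eq_dec s 0) as [Hs0|Hs0].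
  - destruct (Hstep ys Hys) as [_ Hc]. apply Hc. lia.
  - assert (Hk : forall k : nat, Y (y1 + Z.of_nat k * s)).
    { induction k as [|k IHk].
      - simpl. rewrite Z.add_0_r. exact Hy1.
      - destruct (Hstep _ IHk) as [Hk _].
        replace (y1 + Z.of_nat (S k) * s) with (y1 + Z.of_nat k * s + s) by lia. exact Hk. }
    specialize (Hk (Z.to_nat (2*R+1))).
    pose proof (HY _ Hk). pose proof (HY _ Hy1).
    rewrite Z2Nat.id in H0 by lia.
    destruct (Z_lt_le_dec s 0).
    + assert ((2*R+1)*s <= -(2*R+1)) by nia. lia.
    + assert ((2*R+1)*s >= (2*R+1)) by nia. lia.
Qed.

Lemma assemble (Ch : set2) (a b l m N : Z) (W0 : set1) (V : Z -> Z -> Z -> Prop) :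
  a <= b -> l = b - a + 1 ->
  (forall z, sumset1 (xcoords Ch) W0 z <-> a <= z /\ z <= b) ->
  1 <= N -> m >= (l+1)*N ->
  (forall s, 0 <= s < N -> forall y, exists c y' v, Ch (c,y') /\ V s c v /\ y = y' + v) ->
  (forall c y0, Ch (c,y0) -> exists s ys, 0 <= s < N /\
     forall c' y', Ch (c',y') -> (c',y') <> (c,y0) -> ~ V s c' (ys - y')) ->
  arises_as_MAC (pi_image m Ch).
Proof.
  intros Hab Hl HW0 HN Hm LC LW.
  assert (Hl1 : 1 <= l) by lia.
  assert (Hdiam : forall c w0, xcoords Ch c -> W0 w0 -> a <= c + w0 <= b).
  { intros c w0 Hc Hw. apply HW0. exists c, w0. auto. }
  assert (Hne : exists w0, W0 w0).
  { destruct (proj2 (HW0 a) ltac:(lia)) as [x [w [_ [Hw _]]]]. eauto. }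
  destruct Hne as [w00 Hw00].
  assert (Hdiam2 : forall c c', xcoords Ch c -> xcoords Ch c' -> -(l-1) <= c - c' <= l-1).
  { intros c c' Hc Hc'. pose proof (Hdiam c w00 Hc Hw00). pose proof (Hdiam c' w00 Hc' Hw00). lia. }
  exists (fun w => (exists p w0 q, W0 w0 /\ clean N l m p /\ w = w0 - a + p + m*q) \/
    exists s c q, (0 <= s < N) /\ xcoords Ch c /\ V s c q /\ w = s*(l+1) - c + m*q).
  split.
  - intro z. destruct (classic (special N l m z)) as [Hsp|Hsp].
    + destruct Hsp as [s [q [Hs ->]]].
      destruct (LC s Hs q) as [c [y' [v [Hc [HV Hq]]]]].
      exists (c + m*y'), (s*(l+1) - c + m*v). split; [|split].
      * exists (c,y'). split; [exact Hc|]. unfold pi; simpl. ring.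
      * right. exists s, c, v. split; [exact Hs|split; [exists y'; exact Hc|split; [exact HV|reflexivity]]].
      * subst q. ring.
    + destruct (find_clean N l m z Hl1 HN Hm Hsp) as [p [Hp Hzp]].
      destruct (proj2 (HW0 (z - p + a)) ltac:(lia)) as [c [w0 [Hc [Hw0 Heq]]]].
      destruct Hc as [y Hy].
      exists (c + m*y), (w0 - a + p + m*(-y)). split; [|split].
      * exists (c,y). split; [exact Hy|]. unfold pi; simpl. ring.
      * left. exists p, w0, (-y). auto.
      * lia.
  - intros C' HC' [z0 [Hz0 Hz0n]] Hcov.
    destruct Hz0 as [[c y0] [Hcy0 Hz0e]].
    destruct (LW c y0 Hcy0) as [s [ys [Hs Hoth]]].
    destruct (Hcov (s*(l+1) + m*ys)) as [e [w [He [Hw Heq]]]].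
    destruct (HC' e He) as [[c' y'] [Hc'y' He']].
    unfold pi in *; simpl in *.
    destruct (classic ((c',y') = (c,y0))) as [Hq|Hq].
    { injection Hq as -> ->. apply Hz0n. congruence. }
    destruct Hw as [[p [w0 [q [Hw0 [Hp Hw]]]]] | [t [c'' [q'' [Ht [Hc'' [HV Hw]]]]]]].
    + assert (Hc' : xcoords Ch c') by (exists y'; auto).
      pose proof (Hdiam c' w0 Hc' Hw0).
      apply (Hp (c' + w0 - a)). lia.
      exists s, (ys - y' - q). split; auto. lia.
    + assert (Hc' : xcoords Ch c') by (exists y'; auto).
      pose proof (Hdiam2 c' c'' Hc' Hc'').
      destruct (uniq_rep l m N s t c' c'' (ys - y') q'' Hl1 Hm Hs Ht ltac:(lia) ltac:(lia))
        as [<- [<- <-]].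
      exact (Hoth c' y' Hc'y' Hq HV).
Qed.

Definition tasks (F K : list Z) (n : Z -> nat) : list (Z + (Z*nat)) :=
  map (@inl Z (Z*nat)) F ++
  flat_map (fun k => map (fun j => @inr Z (Z*nat) (k,j)) (seq 0 (n k))) K.

Lemma tasks_length F K n : length (tasks F K n) = (length F + list_sum (map n K))%nat.
Proof.
  unfold tasks. rewrite length_app, length_map. f_equal.
  induction K as [|k K IH]; simpl; auto.
  rewrite length_app, length_map, length_seq, IH. reflexivity.
Qed.

Lemma tasks_inl F K n c : In (inl c) (tasks F K n) -> In c F.
Proof.
  unfold tasks. intro H. apply in_app_or in H. destruct H as [H|H].
  - apply in_map_iff in H. destruct H as [x [Hx Hin]]. congruence.
  - apply in_flat_map in H. destruct H as [k [_ H]]. apply in_map_iff in H.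
    destruct H as [x [Hx _]]. discriminate.
Qed.

Lemma tasks_inr F K n k j : In (inr (k,j)) (tasks F K n) -> In k K /\ (j < n k)%nat.
Proof.
  unfold tasks. intro H. apply in_app_or in H. destruct H as [H|H].
  - apply in_map_iff in H. destruct H as [x [Hx Hin]]. discriminate.
  - apply in_flat_map in H. destruct H as [k' [Hk H]]. apply in_map_iff in H.
    destruct H as [x [Hx Hin]]. injection Hx as -> ->. apply in_seq in Hin. split; auto; lia.
Qed.

Lemma tasks_in_l F K n c : In c F -> In (inl c) (tasks F K n).
Proof. intro H. unfold tasks. apply in_or_app. left. apply in_map. exact H. Qed.

Lemma tasks_in_r F K n k j : In k K -> (j < n k)%nat -> In (inr (k,j)) (tasks F K n).
Proof.
  intros Hk Hj. unfold tasks. apply in_or_app. right. apply in_flat_map.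
  exists k. split; auto. apply in_map_iff. exists j. split; auto. apply in_seq. lia.
Qed.

Lemma slot_of (T : list (Z + (Z*nat))) x : In x T ->
  exists s, 0 <= s < Z.of_nat (length T) /\ nth_error T (Z.to_nat s) = Some x.
Proof.
  intro H. destruct (In_nth_error T x H) as [i Hi].
  exists (Z.of_nat i). rewrite Nat2Z.id. split; auto.
  assert (i < length T)%nat by (apply nth_error_Some; congruence). lia.
Qed.

Theorem theorem7
  (Ch : set2)
  (Hbd : bounded1 (xcoords Ch))
  (Fcols : list Z) (HFnd : NoDup Fcols)
  (HF : forall c, In c Fcols <->
          (exists y, Ch (c, y)) /\ fin_set (fun y => Ch (c, y)))
  (Ht : (1 <= length Fcols)%nat)
  (Kcols : list Z) (HKnd : NoDup Kcols)
  (HK : forall c, In c Kcols <-> ~ fin_set (fun y => Ch (c, y)))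
  (l : Z) (Hl : is_ell Ch l)
  (n : Z -> nat) (S : Z -> nat -> set2)
  (Hcover : forall k, In k Kcols -> forall p,
      fiber Ch k p <-> exists j, (j < n k)%nat /\ S k j p)
  (Hdec : forall k, In k Kcols -> forall j, (j < n k)%nat ->
      exists (Wf Uf : Z -> set2), forall p,
        (Col k p /\ ~ S k j p) <->
        ((exists c, In c Fcols /\ sumset2 (fiber Ch c) (Wf c) p) \/
         (exists c, In c Kcols /\ sumset2 (fiber Ch c) (Uf c) p)))
  (m : Z)
  (Hm : m >= (l + 1) * Z.of_nat (length Fcols + list_sum (map n Kcols))) :
  arises_as_MAC (pi_image m Ch).
Proof.
  destruct Hl as [[a [b [[Hab [W0 HW0]] Hlab]]] _].
  destruct (unif_bound Ch Fcols (fun c Hc => proj2 (proj1 (HF c) Hc))) as [R [HR HRb]].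
  set (T := tasks Fcols Kcols n).
  set (Bf := fun c0 q => exists y1 y2, Ch (c0,y1) /\ Ch (c0,y2) /\ y1 <> y2 /\ q = (4*R+1)*y1 - y2).
  set (Vinf := fun k j c q => (c = k /\ q = 0) \/
     exists (Wf Uf : Z -> set2), (forall p,
        (Col k p /\ ~ S k j p) <->
        ((exists c, In c Fcols /\ sumset2 (fiber Ch c) (Wf c) p) \/
         (exists c, In c Kcols /\ sumset2 (fiber Ch c) (Uf c) p))) /\
     ((In c Fcols /\ Wf c (k - c, q)) \/ (In c Kcols /\ Uf c (k - c, q)))).
  set (V := fun s c q => match nth_error T (Z.to_nat s) with
     | Some (inl c0) => c = c0 /\ ~ Bf c0 q
     | Some (inr (k, j)) => Vinf k j c q
     | None => False end).
  assert (HTlen : Z.of_nat (length T) = Z.of_nat (length Fcols + list_sum (map n Kcols))).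
  { unfold T. rewrite tasks_length. reflexivity. }
  apply (assemble Ch a b l m (Z.of_nat (length T)) W0 V Hab Hlab HW0).
  - rewrite HTlen. lia.
  - rewrite HTlen. exact Hm.
  -
    intros s Hs y. unfold V.
    destruct (nth_error T (Z.to_nat s)) as [[c0|[k j]]|] eqn:Hnth.
    + assert (Hc0 : In c0 Fcols).
      { apply (tasks_inl Fcols Kcols n). apply (nth_error_In T _ Hnth). }
      destruct (proj1 (HF c0) Hc0) as [Hne _].
      destruct (fin_cover (fun y => Ch (c0,y)) R HR (fun y Hy => HRb c0 y Hc0 Hy) Hne y)
        as [y' [Hy' HB]].
      exists c0, y', (y - y'). split; auto. split; [|ring].
      split; auto.
    + assert (Hkj : In k Kcols /\ (j < n k)%nat).
      { apply (tasks_inr Fcols). apply (nth_error_In T _ Hnth). }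
      destruct Hkj as [Hk Hj].
      destruct (classic (S k j (k,y))) as [HS|HS].
      * assert (Hf : fiber Ch k (k,y)) by (apply (Hcover k Hk); eauto).
        exists k, y, 0. split; [apply Hf|]. split; [|ring]. left; auto.
      * destruct (Hdec k Hk j Hj) as [Wf [Uf HWU]].
        destruct (proj1 (HWU (k,y)) (conj eq_refl HS)) as [[c [Hc Hsum]]|[c [Hc Hsum]]];
        destruct Hsum as [[x1 x2] [[w1 w2] [[Hx Hxc] [Hw Heq]]]]; simpl in *;
        injection Heq as Heq1 Heq2; subst x1.
        -- exists c, x2, w2. split; auto. split; [|lia]. right. exists Wf, Uf. split; auto.
           left. split; auto. replace (k - c) with w1 by lia. exact Hw.
        -- exists c, x2, w2. split; auto. split; [|lia]. right. exists Wf, Uf. split; auto.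
           right. split; auto. replace (k - c) with w1 by lia. exact Hw.
    + exfalso. apply nth_error_None in Hnth. lia.
  -
    intros c y0 Hcy0.
    destruct (classic (fin_set (fun y => Ch (c,y)))) as [Hfin|Hinf].
    + assert (Hc : In c Fcols) by (apply HF; split; eauto).
      destruct (slot_of T (inl c) (tasks_in_l Fcols Kcols n c Hc)) as [s [Hs Hnth]].
      exists s, ((4*R+1)*y0). split; auto.
      intros c' y' Hc'y' Hne. unfold V. rewrite Hnth. intros [-> HB].
      apply HB. exists y0, y'. split; auto. split; auto. split; auto.
      intro He. apply Hne. congruence.
    + assert (Hk : In c Kcols) by (apply HK; exact Hinf).
      destruct (proj1 (Hcover c Hk (c,y0)) (conj Hcy0 eq_refl)) as [j [Hj HS]].
      destruct (slot_of T (inr (c,j)) (tasks_in_r Fcols Kcols n c j Hk Hj)) as [s [Hs Hnth]].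
      exists s, y0. split; auto.
      intros c' y' Hc'y' Hne. unfold V. rewrite Hnth.
      intros [[-> Hq]|[Wf [Uf [HWU Hor]]]].
      * apply Hne. f_equal. lia.
      * assert (Hp : Col c (c,y0) /\ ~ S c j (c,y0)).
        { apply HWU. destruct Hor as [[Hc' Hw]|[Hc' Hw]].
          - left. exists c'. split; auto. exists (c',y'), (c - c', y0 - y').
            split; [split; auto|]. split; auto. simpl. f_equal; ring.
          - right. exists c'. split; auto. exists (c',y'), (c - c', y0 - y').
            split; [split; auto|]. split; auto. simpl. f_equal; ring. }
        exact (proj2 Hp HS).
Qed.
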